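(* Let $\mathbb F=\mathbb R$ or $\mathbb C$, let $U_1,V_1,U_1',V_1'$ be finite-dimensional normed vector spaces over $\mathbb F$, let $\mathcal A_1,\mathcal B_1:U_1\to V_1$ and $\mathcal A_1',\mathcal B_1':U_1'\to V_1'$ be surjective linear maps, and let $\varphi_1:U_1\to U_1'$, $\psi_1:V_1\to V_1'$ be homeomorphisms with $\psi_1\mathcal A_1=\mathcal A_1'\varphi_1$ and $\psi_1\mathcal B_1=\mathcal B_1'\varphi_1$. Then for every $u\in U_1$ and $v\in V_1$, \[\varphi_1(u+\operatorname{Ker}\mathcal B_1)=\varphi_1(u)+\operatorname{Ker}\mathcal B_1',\qquad \psi_1\bigl(v+\mathcal A_1(\operatorname{Ker}\mathcal B_1)\bigr)=\psi_1(v)+\mathcal A_1'(\operatorname{Ker}\mathcal B_1').\] Consequently $\varphi_1$ and $\psi_1$ induce well-defined bijections $\varphi_2:U_1/\operatorname{Ker}\mathcal B_1\to U_1'/\operatorname{Ker}\mathcal B_1'$ and $\psi_2:V_1/\mathcal A_1(\operatorname{Ker}\mathcal B_1)\to V_1'/\mathcal A_1'(\operatorname{Ker}\mathcal B_1')$, which are homeomorphisms (for the quotient topologies) satisfying $\psi_2\mathcal A_2=\mathcal A_2'\varphi_2$ and $\psi_2\mathcal B_2=\mathcal B_2'\varphi_2$, where $\mathcal A_2,\mathcal B_2$ and $\mathcal A_2',\mathcal B_2'$ are the linear maps induced by $\mathcal A_1,\mathcal B_1$ and $\mathcal A_1',\mathcal B_1'$ on these quotient spaces.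
   Context: Homeomorphisms are with respect to the norm topologies; $\varphi_1,\psi_1$ need not be linear. The induced map $\mathcal A_2:U_1/\operatorname{Ker}\mathcal B_1\to V_1/\mathcal A_1(\operatorname{Ker}\mathcal B_1)$ sends $u+\operatorname{Ker}\mathcal B_1$ to $\mathcal A_1(u)+\mathcal A_1(\operatorname{Ker}\mathcal B_1)$, and $\mathcal B_2$ sends $u+\operatorname{Ker}\mathcal B_1$ to $\mathcal B_1(u)+\mathcal A_1(\operatorname{Ker}\mathcal B_1)$; similarly for the primed maps. *)

(* Defs.v *)
From Stdlib Require Import Reals.
From Stdlib Require Vectors.Fin.
Open Scope R_scope.

Record Cpx := mkC { re : R ; im : R }.
Definition Cadd (a b : Cpx) : Cpx := mkC (re a + re b) (im a + im b).
Definition Copp (a : Cpx) : Cpx := mkC (- re a) (- im a).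
Definition Cmul (a b : Cpx) : Cpx :=
  mkC (re a * re b - im a * im b) (re a * im b + im a * re b).
Definition C0 : Cpx := mkC 0 0.
Definition Cabs (a : Cpx) : R := sqrt (re a * re a + im a * im a).

Inductive scalar_field := FR | FC.

Definition scal (F : scalar_field) : Type :=
  match F with FR => R | FC => Cpx end.
Definition sadd (F : scalar_field) : scal F -> scal F -> scal F :=
  match F return scal F -> scal F -> scal F with FR => Rplus | FC => Cadd end.
Definition sopp (F : scalar_field) : scal F -> scal F :=
  match F return scal F -> scal F with FR => Ropp | FC => Copp end.
Definition smul (F : scalar_field) : scal F -> scal F -> scal F :=
  match F return scal F -> scal F -> scal F with FR => Rmult | FC => Cmul end.
Definition szero (F : scalar_field) : scal F :=
  match F return scal F with FR => 0 | FC => C0 end.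
Definition sabs (F : scalar_field) : scal F -> R :=
  match F return scal F -> R with FR => Rabs | FC => Cabs end.

Definition Vec (F : scalar_field) (n : nat) : Type := Fin.t n -> scal F.
Definition vadd {F n} (x y : Vec F n) : Vec F n := fun i => sadd F (x i) (y i).
Definition vopp {F n} (x : Vec F n) : Vec F n := fun i => sopp F (x i).
Definition vsub {F n} (x y : Vec F n) : Vec F n := vadd x (vopp y).
Definition vzero {F n} : Vec F n := fun _ => szero F.
Definition vscale {F n} (c : scal F) (x : Vec F n) : Vec F n := fun i => smul F c (x i).

Definition is_linear {F n m} (f : Vec F n -> Vec F m) : Prop :=
  (forall x y, f (vadd x y) = vadd (f x) (f y)) /\
  (forall c x, f (vscale c x) = vscale c (f x)).

Definition surjective {A B : Type} (f : A -> B) : Prop := forall b, exists a, f a = b.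
Definition bijective {A B : Type} (f : A -> B) : Prop :=
  exists g : B -> A, (forall a, g (f a) = a) /\ (forall b, f (g b) = b).

Definition is_norm {F n} (N : Vec F n -> R) : Prop :=
  (forall x, 0 <= N x) /\
  (forall x, N x = 0 -> x = vzero) /\
  (forall c x, N (vscale c x) = sabs F c * N x) /\
  (forall x y, N (vadd x y) <= N x + N y).

Definition topology (X : Type) := (X -> Prop) -> Prop.

Definition norm_open {F n} (N : Vec F n -> R) : topology (Vec F n) :=
  fun S => forall x, S x -> exists eps, 0 < eps /\ forall y, N (vsub y x) < eps -> S y.

Definition continuous {X Y} (TX : topology X) (TY : topology Y) (f : X -> Y) : Prop :=
  forall S, TY S -> TX (fun x => S (f x)).

Definition homeomorphism {X Y} (TX : topology X) (TY : topology Y) (f : X -> Y) : Prop :=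
  exists g : Y -> X, (forall x, g (f x) = x) /\ (forall y, f (g y) = y) /\
    continuous TX TY f /\ continuous TY TX g.

Definition set_eq {X} (S T : X -> Prop) : Prop := forall x, S x <-> T x.
Definition fimage {X Y} (f : X -> Y) (S : X -> Prop) : Y -> Prop :=
  fun y => exists x, S x /\ f x = y.
Definition ker {F n m} (f : Vec F n -> Vec F m) : Vec F n -> Prop :=
  fun x => f x = vzero.
Definition vcoset {F n} (u : Vec F n) (W : Vec F n -> Prop) : Vec F n -> Prop :=
  fun x => W (vsub x u).

Definition quot {F n} (W : Vec F n -> Prop) : Type :=
  { C : Vec F n -> Prop | exists u, C = vcoset u W }.
Definition qproj {F n} (W : Vec F n -> Prop) (u : Vec F n) : quot W :=
  exist _ (vcoset u W) (ex_intro _ u eq_refl).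
Definition quot_topology {F n} (T : topology (Vec F n)) (W : Vec F n -> Prop)
  : topology (quot W) :=
  fun S => T (fun x => S (qproj W x)).

(* Main.v *)
Require Import Defs.
From Stdlib Require Import Reals.
From Stdlib Require Import FunctionalExtensionality ProofIrrelevance ClassicalEpsilon PropExtensionality.
Open Scope R_scope.

Definition sone (F : scalar_field) : scal F :=
  match F return scal F with FR => 1 | FC => mkC 1 0 end.

Ltac sc F := destruct F; simpl in *;
  [ ring
  | repeat match goal with c : Cpx |- _ => destruct c end;
    unfold Cadd, Copp, Cmul, C0 in *; simpl; f_equal; ring ].

Lemma s_sub_add F (a b : scal F) : a = sadd F (sadd F a (sopp F b)) b.
Proof. sc F. Qed.
Lemma s_subself F (a : scal F) : sadd F a (sopp F a) = szero F.
Proof. sc F. Qed.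
Lemma s_mul0 F (a : scal F) : smul F (szero F) a = szero F.
Proof. sc F. Qed.
Lemma s_mulm1 F (a : scal F) : smul F (sopp F (sone F)) a = sopp F a.
Proof. sc F. Qed.
Lemma s_chain F (x a b : scal F) :
  sadd F x (sopp F b) = sadd F (sadd F x (sopp F a)) (sadd F a (sopp F b)).
Proof. sc F. Qed.
Lemma s_oppsub F (a b : scal F) : sopp F (sadd F a (sopp F b)) = sadd F b (sopp F a).
Proof. sc F. Qed.
Lemma s_addsub F (a b : scal F) : sadd F (sadd F a b) (sopp F a) = b.
Proof. sc F. Qed.
Lemma s_zadd F (a : scal F) : sadd F (szero F) a = a.
Proof. sc F. Qed.
Lemma s_add0 F : sadd F (szero F) (szero F) = szero F.
Proof. sc F. Qed.
Lemma s_opp0 F : sopp F (szero F) = szero F.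
Proof. sc F. Qed.
Lemma s_subadd F (v w : scal F) : w = sadd F v (sadd F w (sopp F v)).
Proof. sc F. Qed.
Lemma s_subD F (a b c d : scal F) :
  sadd F (sadd F a b) (sopp F (sadd F c d)) = sadd F (sadd F a (sopp F c)) (sadd F b (sopp F d)).
Proof. sc F. Qed.

Section V.
Context {F : scalar_field}.

Lemma vsub_self {n} (x : Vec F n) : vsub x x = vzero.
Proof. extensionality i. unfold vsub, vadd, vopp, vzero. apply s_subself. Qed.

Lemma vsub_eq0 {n} (x y : Vec F n) : vsub x y = vzero -> x = y.
Proof.
  intro H. extensionality i. rewrite (s_sub_add F (x i) (y i)).
  change (sadd F (x i) (sopp F (y i))) with (vsub x y i). rewrite H.
  unfold vzero. apply s_zadd. Qed.

Lemma v_chain {n} (x a b : Vec F n) : vsub x b = vadd (vsub x a) (vsub a b).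
Proof. extensionality i. unfold vsub, vadd, vopp. apply s_chain. Qed.

Lemma v_oppsub {n} (a b : Vec F n) : vopp (vsub a b) = vsub b a.
Proof. extensionality i. unfold vsub, vadd, vopp. apply s_oppsub. Qed.

Lemma v_addsub {n} (a b : Vec F n) : vsub (vadd a b) a = b.
Proof. extensionality i. unfold vsub, vadd, vopp. apply s_addsub. Qed.

Lemma v_subadd {n} (v w : Vec F n) : w = vadd v (vsub w v).
Proof. extensionality i. unfold vsub, vadd, vopp. apply s_subadd. Qed.

Lemma v_subD {n} (a b c d : Vec F n) : vsub (vadd a b) (vadd c d) = vadd (vsub a c) (vsub b d).
Proof. extensionality i. unfold vsub, vadd, vopp. apply s_subD. Qed.

Lemma v_add0 {n} : vadd (@vzero F n) vzero = vzero.
Proof. extensionality i. unfold vadd, vzero. apply s_add0. Qed.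
Lemma v_opp0 {n} : vopp (@vzero F n) = vzero.
Proof. extensionality i. unfold vopp, vzero. apply s_opp0. Qed.

Lemma lin0 {n m} (f : Vec F n -> Vec F m) : is_linear f -> f vzero = vzero.
Proof.
  intros [_ Hs].
  assert (E : forall k (x : Vec F k), vscale (szero F) x = vzero).
  { intros k x. extensionality i. unfold vscale, vzero. apply s_mul0. }
  rewrite <- (E n vzero), Hs. apply E. Qed.

Lemma linopp {n m} (f : Vec F n -> Vec F m) x : is_linear f -> f (vopp x) = vopp (f x).
Proof.
  intros [_ Hs].
  assert (E : forall k (x : Vec F k), vscale (sopp F (sone F)) x = vopp x).
  { intros k y. extensionality i. unfold vscale, vopp. apply s_mulm1. }
  rewrite <- !E, Hs. reflexivity. Qed.

Lemma linsub {n m} (f : Vec F n -> Vec F m) x y : is_linear f -> f (vsub x y) = vsub (f x) (f y).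
Proof. intro H. unfold vsub. rewrite (proj1 H), linopp; auto. Qed.

Lemma ker_coset {n m} (f : Vec F n -> Vec F m) u x :
  is_linear f -> vcoset u (ker f) x <-> f x = f u.
Proof.
  intro H. unfold vcoset, ker. rewrite linsub by auto. split.
  - apply vsub_eq0.
  - intros ->. apply vsub_self. Qed.

Definition subsp {n} (W : Vec F n -> Prop) : Prop :=
  W vzero /\ (forall x y, W x -> W y -> W (vadd x y)) /\ (forall x, W x -> W (vopp x)).

Lemma ker_subsp {n m} (f : Vec F n -> Vec F m) : is_linear f -> subsp (ker f).
Proof.
  intro H. unfold subsp, ker. split; [|split].
  - apply lin0; auto.
  - intros x y Hx Hy. rewrite (proj1 H), Hx, Hy. apply v_add0.
  - intros x Hx. rewrite linopp, Hx by auto. apply v_opp0. Qed.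

Lemma img_subsp {n m k} (A : Vec F n -> Vec F m) (B : Vec F n -> Vec F k) :
  is_linear A -> is_linear B -> subsp (fimage A (ker B)).
Proof.
  intros HA HB. destruct (ker_subsp B HB) as [H0 [Hadd Hopp]].
  unfold subsp, fimage. split; [|split].
  - exists vzero. split; auto. apply lin0; auto.
  - intros x y [a [Ha <-]] [b [Hb <-]]. exists (vadd a b). split; auto. apply (proj1 HA).
  - intros x [a [Ha <-]]. exists (vopp a). split; auto. apply linopp; auto. Qed.

Lemma sig_ext {X} (P : X -> Prop) (a b : X) (Ha : P a) (Hb : P b) :
  a = b -> exist P a Ha = exist P b Hb.
Proof. intros ->. f_equal. apply proof_irrelevance. Qed.

Lemma qproj_eq {n} (W : Vec F n -> Prop) a b : subsp W -> W (vsub a b) -> qproj W a = qproj W b.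
Proof.
  intros [H0 [Hadd Hopp]] Hab. unfold qproj. apply sig_ext.
  extensionality x. apply propositional_extensionality. unfold vcoset. split; intro Hx.
  - rewrite (v_chain x a b). auto.
  - rewrite (v_chain x b a). rewrite <- (v_oppsub a b). auto. Qed.

Lemma quot_surj {n} (W : Vec F n -> Prop) (x : quot W) : exists u, x = qproj W u.
Proof. destruct x as [C [u e]]. exists u. subst. unfold qproj. apply sig_ext. reflexivity. Qed.

Definition lift {n m} (W : Vec F n -> Prop) (W' : Vec F m -> Prop) (f : Vec F n -> Vec F m)
  (x : quot W) : quot W' :=
  qproj W' (f (proj1_sig (constructive_indefinite_description _ (proj2_sig x)))).

Lemma lift_qproj {n m} (W : Vec F n -> Prop) (W' : Vec F m -> Prop) f u :
  subsp W -> subsp W' ->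
  (forall u x, vcoset u W x -> vcoset (f u) W' (f x)) ->
  lift W W' f (qproj W u) = qproj W' (f u).
Proof.
  intros HW HW' Hf. unfold lift.
  destruct (constructive_indefinite_description _ _) as [u' e]. simpl.
  symmetry. apply qproj_eq; auto.
  assert (Hu : vcoset u W u) by (unfold vcoset; rewrite vsub_self; apply HW).
  simpl in e. rewrite e in Hu. apply (Hf u' u Hu). Qed.

Lemma norm_open_ext {n} (N : Vec F n -> R) (S S' : Vec F n -> Prop) :
  norm_open N S -> (forall x, S x <-> S' x) -> norm_open N S'.
Proof.
  intros H E x Hx. apply E in Hx. destruct (H x Hx) as [e [He Hy]].
  exists e. split; auto. intros y Hy'. apply E. auto. Qed.

Lemma induced {n m} (N : Vec F n -> R) (N' : Vec F m -> R)
  (W : Vec F n -> Prop) (W' : Vec F m -> Prop) (f : Vec F n -> Vec F m) :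
  subsp W -> subsp W' -> homeomorphism (norm_open N) (norm_open N') f ->
  (forall u, set_eq (fimage f (vcoset u W)) (vcoset (f u) W')) ->
  exists f2 : quot W -> quot W',
    (forall u, f2 (qproj W u) = qproj W' (f u)) /\ bijective f2 /\
    homeomorphism (quot_topology (norm_open N) W) (quot_topology (norm_open N') W') f2.
Proof.
  intros HW HW' [g [Hgf [Hfg [Cf Cg]]]] Hc.
  assert (Pf : forall u x, vcoset u W x -> vcoset (f u) W' (f x)).
  { intros u x H. apply Hc. exists x. auto. }
  assert (Pg : forall u x, vcoset u W' x -> vcoset (g u) W (g x)).
  { intros u x H. rewrite <- (Hfg u) in H. apply Hc in H. destruct H as [z [Hz <-]].
    rewrite Hgf. auto. }
  assert (L1 : forall u, lift W W' f (qproj W u) = qproj W' (f u)) by (intro; apply lift_qproj; auto).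
  assert (L2 : forall u, lift W' W g (qproj W' u) = qproj W (g u)) by (intro; apply lift_qproj; auto).
  assert (I1 : forall a, lift W' W g (lift W W' f a) = a).
  { intro a. destruct (quot_surj W a) as [u ->]. rewrite L1, L2, Hgf. reflexivity. }
  assert (I2 : forall b, lift W W' f (lift W' W g b) = b).
  { intro b. destruct (quot_surj W' b) as [u ->]. rewrite L2, L1, Hfg. reflexivity. }
  exists (lift W W' f). split; [exact L1|]. split.
  - exists (lift W' W g). auto.
  - exists (lift W' W g). split; [exact I1|]. split; [exact I2|]. split.
    + intros S HS. unfold quot_topology in *.
      apply (norm_open_ext N _ _ (Cf _ HS)). intro x. rewrite L1. tauto.
    + intros S HS. unfold quot_topology in *.
      apply (norm_open_ext N' _ _ (Cg _ HS)). intro x. rewrite L2. tauto.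
Qed.

End V.

Theorem lemma5 (F : scalar_field) (p q p' q' : nat)
  (NU : Vec F p -> R) (NV : Vec F q -> R) (NU' : Vec F p' -> R) (NV' : Vec F q' -> R)
  (HNU : is_norm NU) (HNV : is_norm NV) (HNU' : is_norm NU') (HNV' : is_norm NV')
  (A1 B1 : Vec F p -> Vec F q) (A1' B1' : Vec F p' -> Vec F q')
  (HA1l : is_linear A1) (HB1l : is_linear B1) (HA1'l : is_linear A1') (HB1'l : is_linear B1')
  (HA1s : surjective A1) (HB1s : surjective B1) (HA1's : surjective A1') (HB1's : surjective B1')
  (phi1 : Vec F p -> Vec F p') (psi1 : Vec F q -> Vec F q')
  (Hphi1 : homeomorphism (norm_open NU) (norm_open NU') phi1)
  (Hpsi1 : homeomorphism (norm_open NV) (norm_open NV') psi1)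
  (HA : forall u, psi1 (A1 u) = A1' (phi1 u))
  (HB : forall u, psi1 (B1 u) = B1' (phi1 u)) :
  (forall u : Vec F p,
     set_eq (fimage phi1 (vcoset u (ker B1))) (vcoset (phi1 u) (ker B1'))) /\
  (forall v : Vec F q,
     set_eq (fimage psi1 (vcoset v (fimage A1 (ker B1))))
            (vcoset (psi1 v) (fimage A1' (ker B1')))) /\
  exists (phi2 : quot (ker B1) -> quot (ker B1'))
         (psi2 : quot (fimage A1 (ker B1)) -> quot (fimage A1' (ker B1'))),
    (forall u, phi2 (qproj (ker B1) u) = qproj (ker B1') (phi1 u)) /\
    (forall v, psi2 (qproj (fimage A1 (ker B1)) v)
               = qproj (fimage A1' (ker B1')) (psi1 v)) /\
    bijective phi2 /\ bijective psi2 /\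
    homeomorphism (quot_topology (norm_open NU) (ker B1))
                  (quot_topology (norm_open NU') (ker B1')) phi2 /\
    homeomorphism (quot_topology (norm_open NV) (fimage A1 (ker B1)))
                  (quot_topology (norm_open NV') (fimage A1' (ker B1'))) psi2 /\
    forall (A2 B2 : quot (ker B1) -> quot (fimage A1 (ker B1)))
           (A2' B2' : quot (ker B1') -> quot (fimage A1' (ker B1'))),
      (forall u, A2 (qproj (ker B1) u) = qproj (fimage A1 (ker B1)) (A1 u)) ->
      (forall u, B2 (qproj (ker B1) u) = qproj (fimage A1 (ker B1)) (B1 u)) ->
      (forall u, A2' (qproj (ker B1') u) = qproj (fimage A1' (ker B1')) (A1' u)) ->
      (forall u, B2' (qproj (ker B1') u) = qproj (fimage A1' (ker B1')) (B1' u)) ->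
      (forall x, psi2 (A2 x) = A2' (phi2 x)) /\
      (forall x, psi2 (B2 x) = B2' (phi2 x)).
Proof.
  assert (P1 : forall u : Vec F p,
     set_eq (fimage phi1 (vcoset u (ker B1))) (vcoset (phi1 u) (ker B1'))).
  { intros u y. destruct Hphi1 as [g [Hgf [Hfg _]]]. destruct Hpsi1 as [h [Hhf _]].
    rewrite ker_coset by auto. split.
    - intros [x [Hx <-]]. apply ker_coset in Hx; auto. rewrite <- !HB, Hx. reflexivity.
    - intro Hy. exists (g y). split; [|apply Hfg].
      apply ker_coset; auto.
      rewrite <- (Hhf (B1 (g y))), <- (Hhf (B1 u)), !HB, Hfg, Hy. reflexivity. }
  assert (D : forall n m k (A : Vec F n -> Vec F m) (B : Vec F n -> Vec F k) u0 w,
     is_linear A -> is_linear B ->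
     (vcoset (A u0) (fimage A (ker B)) w <-> exists x, vcoset u0 (ker B) x /\ A x = w)).
  { intros n m k A B u0 w HAl HBl. unfold vcoset, fimage. split.
    - intros [kk [Hk Ek]]. exists (vadd u0 kk). rewrite v_addsub. split; auto.
      rewrite (proj1 HAl), Ek. symmetry. apply v_subadd.
    - intros [x [Hx <-]]. exists (vsub x u0). split; auto. apply linsub; auto. }
  assert (P2 : forall v : Vec F q,
     set_eq (fimage psi1 (vcoset v (fimage A1 (ker B1))))
            (vcoset (psi1 v) (fimage A1' (ker B1')))).
  { intros v y. destruct (HA1s v) as [u0 <-]. rewrite HA, D by auto. split.
    - intros [w [Hw <-]]. apply D in Hw; auto. destruct Hw as [x [Hx <-]].
      exists (phi1 x). split; auto. apply P1. exists x. auto.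
    - intros [x' [Hx' <-]]. apply P1 in Hx'. destruct Hx' as [x [Hx <-]].
      exists (A1 x). split; auto. apply D; auto. exists x. auto. }
  split; [exact P1|]. split; [exact P2|].
  destruct (induced NU NU' (ker B1) (ker B1') phi1 (ker_subsp _ HB1l) (ker_subsp _ HB1'l) Hphi1 P1)
    as [phi2 [E1 [Bi1 Ho1]]].
  destruct (induced NV NV' _ _ psi1 (img_subsp _ _ HA1l HB1l) (img_subsp _ _ HA1'l HB1'l) Hpsi1 P2)
    as [psi2 [E2 [Bi2 Ho2]]].
  exists phi2, psi2. repeat split; auto.
  - intros x. destruct (quot_surj _ x) as [u ->]. rewrite H, E2, E1, H1, HA. reflexivity.
  - intros x. destruct (quot_surj _ x) as [u ->]. rewrite H0, E2, E1, H2, HB. reflexivity.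
Qed.
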